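(* Let $d\ge1$, $0<\mu\le L$, let $A\in\mathbb{R}^{d\times d}$ be symmetric with $\mu I\preceq A\preceq LI$, $b\in\mathbb{R}^d$, $f(x)=\frac12x^\top Ax+b^\top x$, and let $\{x_t\},\{G_t\}$ be generated by Sharpened-BFGS for quadratics from an arbitrary $x_0$, assuming $\nabla f(x_t)\neq0$ for all $t$ considered. Let $\theta_t:=\theta(A,G_t,x_{t+1}-x_t)$ and $\sigma_t:=\sigma(A,G_t)$. Then for all $t\ge0$, $$\sigma_{t+1}\le\left(1-\frac{\mu}{dL}\right)\left(\sigma_t-\theta_t^2\right),$$ and for all $t\ge1$, $$\sum_{i=0}^{t-1}\frac{\theta_i^2}{\left(1-\frac{\mu}{dL}\right)^i}\le\sigma_0.$$
   Context: For symmetric positive definite $A,G\in\mathbb{R}^{d\times d}$ and $u\in\mathbb{R}^d\setminus\{0\}$, the BFGS operator is $\mathrm{BFGS}(A,G,u):=G-\frac{Guu^\top G}{u^\top Gu}+\frac{Auu^\top A}{u^\top Au}$. The greedy vector is $\bar u(A,G):=\arg\max_{u\in\{e_1,\dots,e_d\}}\frac{u^\top Gu}{u^\top Au}$ (ties broken arbitrarily). Define $\theta(A,G,u):=\left(\frac{u^\top (G-A)A^{-1}(G-A)u}{u^\top GA^{-1}Gu}\right)^{1/2}$ and $\sigma(A,G):=\mathrm{Tr}(A^{-1}G)-d$. Sharpened-BFGS for quadratics: set $G_0=LI$; for $t=0,1,2,\dots$: $x_{t+1}=x_t-G_t^{-1}\nabla f(x_t)$, $s_t=x_{t+1}-x_t$,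 $\bar G_t=\mathrm{BFGS}(A,G_t,s_t)$, $\bar u=\bar u(A,\bar G_t)$, $G_{t+1}=\mathrm{BFGS}(A,\bar G_t,\bar u)$. *)

(* Defs.v *)
From mathcomp Require Import all_boot all_order all_algebra.
Set Implicit Arguments. Unset Strict Implicit. Unset Printing Implicit Defensive.
Import Order.TTheory GRing.Theory Num.Theory.
Local Open Scope ring_scope.

Section Defs.
Variables (R : rcfType) (d : nat).

Definition qf (M : 'M[R]_d) (u : 'cV[R]_d) : R := (u^T *m M *m u) 0 0.

Definition psdmx (M : 'M[R]_d) : Prop := forall v : 'cV[R]_d, 0 <= qf M v.

Definition symmx (M : 'M[R]_d) : Prop := M^T = M.

Definition fquad (A : 'M[R]_d) (b : 'cV[R]_d) (x : 'cV[R]_d) : R :=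
  2^-1 * qf A x + (b^T *m x) 0 0.

(* gradient of fquad for symmetric A *)
Definition gradq (A : 'M[R]_d) (b : 'cV[R]_d) (x : 'cV[R]_d) : 'cV[R]_d :=
  A *m x + b.

Definition BFGS (A G : 'M[R]_d) (u : 'cV[R]_d) : 'M[R]_d :=
  G - (qf G u)^-1 *: (G *m u *m u^T *m G) + (qf A u)^-1 *: (A *m u *m u^T *m A).

Definition evec (i : 'I_d) : 'cV[R]_d := delta_mx i 0.

Definition gratio (A G : 'M[R]_d) (u : 'cV[R]_d) : R := qf G u / qf A u.

Definition theta (A G : 'M[R]_d) (u : 'cV[R]_d) : R :=
  Num.sqrt (qf ((G - A) *m invmx A *m (G - A)) u / qf (G *m invmx A *m G) u).

Definition sigma (A G : 'M[R]_d) : R := \tr (invmx A *m G) - d%:R.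

End Defs.

(* Main.v *)
Require Import Defs.
From mathcomp Require Import all_boot all_order all_algebra.
From mathcomp Require Import ring lra.
Set Implicit Arguments. Unset Strict Implicit. Unset Printing Implicit Defensive.
Import Order.TTheory GRing.Theory Num.Theory.
Local Open Scope ring_scope.

Definition bil (R : rcfType) (n : nat) (M : 'M[R]_n) (u v : 'cV[R]_n) : R :=
  (u^T *m M *m v) 0 0.

Lemma qfE (R : rcfType) n (M : 'M[R]_n) u : qf M u = bil M u u.
Proof. by []. Qed.

Lemma bil_tr (R : rcfType) n (M : 'M[R]_n) u v : bil M u v = bil M^T v u.
Proof.
rewrite /bil; transitivity ((u^T *m M *m v)^T 0 0); first by rewrite [RHS]mxE.
by rewrite !trmx_mul trmxK mulmxA.
Qed.

Lemma bil_sym (R : rcfType) n (M : 'M[R]_n) u v : symmx M -> bil M u v = bil M v u.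
Proof. by move=> sM; rewrite bil_tr sM. Qed.

Lemma bilDr (R : rcfType) n (M : 'M[R]_n) u v w : bil M u (v + w) = bil M u v + bil M u w.
Proof. by rewrite /bil mulmxDr mxE. Qed.

Lemma bilDl (R : rcfType) n (M : 'M[R]_n) u v w : bil M (v + w) u = bil M v u + bil M w u.
Proof. by rewrite /bil linearD /= !mulmxDl mxE. Qed.

Lemma bilZr (R : rcfType) n (M : 'M[R]_n) u v a : bil M u (a *: v) = a * bil M u v.
Proof. by rewrite /bil -scalemxAr mxE. Qed.

Lemma bilZl (R : rcfType) n (M : 'M[R]_n) u v a : bil M (a *: v) u = a * bil M v u.
Proof. by rewrite /bil linearZ /= -!scalemxAl mxE. Qed.

Lemma bilNr (R : rcfType) n (M : 'M[R]_n) u v : bil M u (- v) = - bil M u v.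
Proof. by rewrite -scaleN1r bilZr mulN1r. Qed.

Lemma bilNl (R : rcfType) n (M : 'M[R]_n) u v : bil M (- v) u = - bil M v u.
Proof. by rewrite -scaleN1r bilZl mulN1r. Qed.

Lemma bilBr (R : rcfType) n (M : 'M[R]_n) u v w : bil M u (v - w) = bil M u v - bil M u w.
Proof. by rewrite bilDr bilNr. Qed.

Lemma bilBl (R : rcfType) n (M : 'M[R]_n) u v w : bil M (v - w) u = bil M v u - bil M w u.
Proof. by rewrite bilDl bilNl. Qed.

Lemma bilMD (R : rcfType) n (M N : 'M[R]_n) u v : bil (M + N) u v = bil M u v + bil N u v.
Proof. by rewrite /bil mulmxDr mulmxDl mxE. Qed.

Lemma bilMN (R : rcfType) n (M : 'M[R]_n) u v : bil (- M) u v = - bil M u v.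
Proof. by rewrite /bil mulmxN mulNmx mxE. Qed.

Lemma bilMB (R : rcfType) n (M N : 'M[R]_n) u v : bil (M - N) u v = bil M u v - bil N u v.
Proof. by rewrite bilMD bilMN. Qed.

Lemma bilMZ (R : rcfType) n (M : 'M[R]_n) u v a : bil (a *: M) u v = a * bil M u v.
Proof. by rewrite /bil -scalemxAr -scalemxAl mxE. Qed.

Lemma bil_mul (R : rcfType) n (M X Y : 'M[R]_n) u v :
  bil M (X *m u) (Y *m v) = bil (X^T *m M *m Y) u v.
Proof. by rewrite /bil trmx_mul !mulmxA. Qed.

Lemma bil_scalar (R : rcfType) n (a : R) u v : bil (a%:M : 'M[R]_n) u v = a * bil 1%:M u v.
Proof. by rewrite -[in LHS]scalemx1 bilMZ. Qed.

Lemma mx11_mul (R : rcfType) (P Q : 'M[R]_1) : (P *m Q) 0 0 = P 0 0 * Q 0 0.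
Proof. by rewrite mxE big_ord1. Qed.

Lemma tr11 (R : rcfType) (P : 'M[R]_1) : \tr P = P 0 0.
Proof. by rewrite /mxtrace big_ord1. Qed.

Lemma tr_rank1 (R : rcfType) n (M X Y : 'M[R]_n) u :
  \tr (M *m (X *m u *m u^T *m Y)) = qf (Y *m M *m X) u.
Proof.
have -> : M *m (X *m u *m u^T *m Y) = (M *m X *m u) *m (u^T *m Y) by rewrite !mulmxA.
by rewrite mxtrace_mulC tr11 /qf !mulmxA.
Qed.

Lemma qf_rank1 (R : rcfType) n (X Y : 'M[R]_n) u v :
  qf (X *m u *m u^T *m Y) v = bil X v u * bil Y u v.
Proof.
rewrite /qf /bil.
have -> : v^T *m (X *m u *m u^T *m Y) *m v = (v^T *m X *m u) *m (u^T *m Y *m v).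
  by rewrite !mulmxA.
by rewrite mx11_mul.
Qed.

Lemma qf_evec (R : rcfType) n (M : 'M[R]_n) j : qf M (evec R j) = M j j.
Proof.
by rewrite /qf /evec trmx_delta -rowE -colE !mxE.
Qed.

Lemma qf1_ge0 (R : rcfType) n (u : 'cV[R]_n) : 0 <= qf 1%:M u.
Proof.
rewrite /qf mulmx1 mxE; apply: sumr_ge0 => i _; rewrite mxE.
by rewrite -expr2 sqr_ge0.
Qed.

Lemma qf1_gt0 (R : rcfType) n (u : 'cV[R]_n) : u != 0 -> 0 < qf 1%:M u.
Proof.
move=> nz; rewrite lt_def qf1_ge0 andbT.
apply: contraNneq nz; rewrite /qf mulmx1 mxE => H.
apply/eqP/matrixP => i j; rewrite (ord1 j) mxE.
have : \sum_(k < n) u^T 0 k * u k 0 == 0 by rewrite H.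
rewrite psumr_eq0; last by move=> k _; rewrite mxE -expr2 sqr_ge0.
move/allP/(_ i (mem_index_enum _)); rewrite mxE -expr2 sqrf_eq0.
by move/eqP.
Qed.

Lemma quad_disc (R : rcfType) (a b c : R) : 0 <= c ->
  (forall t, 0 <= a + b * t * 2 + c * t ^+ 2) -> b ^+ 2 <= a * c.
Proof.
move=> c0 H; case: (ltrgt0P c) c0 H => // [cpos|->] _ H.
- have := H (- b / c); set t := (- b / c) => Ht.
  have ht : c * t = - b by rewrite /t mulrC divfK ?gt_eqF.
  have := mulr_ge0 (ltW cpos) Ht.
  have -> : c * (a + b * t * 2 + c * t ^+ 2) = a * c + b * (c * t) * 2 + (c * t) ^+ 2 by ring.
  rewrite ht; nra.
- case: (eqVneq b 0) => [->|bnz]; first by rewrite expr0n /= mulr0.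
  have := H (- (a + 1) / (b * 2)).
  have -> : b * (- (a + 1) / (b * 2)) * 2 = - (a + 1).
    by field.
  rewrite expr2 !mul0r addr0; lra.
Qed.

Lemma qf_add_scale (R : rcfType) n (M : 'M[R]_n) x y t : symmx M ->
  qf M (x + t *: y) = qf M x + bil M x y * t * 2 + qf M y * t ^+ 2.
Proof.
move=> sM; rewrite !qfE !bilDl !bilDr !bilZl !bilZr (@bil_sym _ _ _ y x sM).
ring.
Qed.

Lemma cauchy_schwarz (R : rcfType) n (M : 'M[R]_n) x y : symmx M -> psdmx M ->
  bil M x y ^+ 2 <= qf M x * qf M y.
Proof.
move=> sM pM; apply: quad_disc; first exact: pM.
by move=> t; rewrite -qf_add_scale.
Qed.

Lemma pd_of (R : rcfType) n (A : 'M[R]_n) (mu : R) (u : 'cV[R]_n) :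
  0 < mu -> psdmx (A - mu%:M) -> mu * qf 1%:M u <= qf A u.
Proof.
move=> mu0 pA; have := pA u; rewrite qfE bilMB bil_scalar -qfE -qfE.
by rewrite subr_ge0.
Qed.

Lemma pd_gt0 (R : rcfType) n (A : 'M[R]_n) (mu : R) (u : 'cV[R]_n) :
  0 < mu -> psdmx (A - mu%:M) -> u != 0 -> 0 < qf A u.
Proof.
move=> mu0 pA nz; apply: lt_le_trans (pd_of u mu0 pA).
by rewrite mulr_gt0 // qf1_gt0.
Qed.

Lemma pd_unit (R : rcfType) n (A : 'M[R]_n) :
  (forall u, u != 0 -> 0 < qf A u) -> A \in unitmx.
Proof.
move=> H; rewrite -row_free_unit -kermx_eq0; apply/eqP/row_matrixP => i.
rewrite row0; set r := row i (kermx A).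
have rA : r *m A = 0 by rewrite /r -row_mul mulmx_ker row0.
apply/eqP; apply: contraT => nz.
have nzT : r^T != 0 by apply: contra nz => /eqP/(congr1 trmx); rewrite trmxK trmx0 => ->.
have := H _ nzT; rewrite /qf trmxK rA mul0mx mxE ltxx.
by [].
Qed.

Lemma bil_evec (R : rcfType) n (M : 'M[R]_n) i j : bil M (evec R i) (evec R j) = M i j.
Proof. by rewrite /bil /evec trmx_delta -rowE -colE !mxE. Qed.

Lemma psd_diag0 (R : rcfType) n (M : 'M[R]_n) : symmx M -> psdmx M ->
  (forall i, M i i = 0) -> M = 0.
Proof.
move=> sM pM H; apply/matrixP => i j; rewrite mxE.
have := cauchy_schwarz (evec R i) (evec R j) sM pM.
rewrite !qf_evec bil_evec !H mul0r.
by move=> h; apply/eqP; rewrite -sqrf_eq0 eq_le h sqr_ge0.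
Qed.

Lemma tr_rank1' (R : rcfType) n (B : 'M[R]_n) w : \tr (B *m (w *m w^T)) = qf B w.
Proof. by rewrite mulmxA mxtrace_mulC tr11 /qf mulmxA. Qed.

Lemma tr_psd_ge0 (R : rcfType) n (B M : 'M[R]_n) :
  psdmx B -> symmx M -> psdmx M -> 0 <= \tr (B *m M).
Proof.
move=> pB.
suff: forall (k : nat) (M : 'M[R]_n), (#|[set i | M i i != 0%R]| <= k)%N -> symmx M -> psdmx M ->
  0 <= \tr (B *m M) by move=> H sM pM; exact: H _ _ (leqnn _) sM pM.
have base : forall M : 'M[R]_n, symmx M -> psdmx M -> (forall i, M i i = 0) ->
    0 <= \tr (B *m M).
  by move=> M0 sM pM H; rewrite (psd_diag0 sM pM H) mulmx0 mxtrace0.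
elim=> [|k IH] M0.
  rewrite leqn0 cards_eq0 => /eqP S0 sM pM; apply: base => // i.
  apply/eqP; apply: contraT => h.
  have : i \in [set i | M0 i i != 0] by rewrite inE.
  by rewrite S0 inE.
move=> Hk sM pM.
case: (pickP [pred i | M0 i i != 0]) => [i /= Mi | H0]; last first.
  by apply: base => // i; apply/eqP; have := H0 i; rewrite /= => /negbFE.
have Mii : 0 < M0 i i by rewrite lt_def Mi -qf_evec pM.
set c := (M0 i i)^-1.
have c0 : 0 <= c by rewrite invr_ge0 ltW.
set w := M0 *m evec R i.
set M' := M0 - c *: (w *m w^T).
have wj : forall j, w j 0 = M0 j i by move=> j; rewrite /w /evec -colE mxE.
have wdef : w = M0 *m evec R i by [].
clearbody w.
have M'jj : forall j, M' j j = M0 j j - c * M0 j i ^+ 2.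
  by move=> j; rewrite /M' !mxE big_ord1 !mxE wj expr2.
have sM' : symmx M'.
  by rewrite /symmx /M' linearB linearZ /= trmx_mul trmxK sM.
have pM' : psdmx M'.
  move=> v; rewrite qfE bilMB bilMZ.
  have -> : w *m w^T = M0 *m evec R i *m (evec R i)^T *m M0^T by rewrite wdef trmx_mul !mulmxA.
  rewrite -!qfE qf_rank1 [bil M0^T _ _]bil_tr trmxK.
  have := cauchy_schwarz v (evec R i) sM pM; rewrite qf_evec -expr2.
  move=> CS; rewrite subr_ge0; apply: le_trans (ler_wpM2l c0 CS) _.
  by rewrite /c mulrC -mulrA mulfV ?mulr1 ?lt0r_neq0.
have Hk' : (#|[set j | M' j j != 0%R]| <= k)%N.
  rewrite -ltnS; apply: leq_trans Hk; apply: proper_card; apply/properP; split.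
    apply/subsetP => j; rewrite !inE; apply: contraNneq => Mj.
    apply/eqP; apply: le_anti; rewrite -{2}(qf_evec M' j) pM' andbT M'jj Mj sub0r.
    by rewrite oppr_le0 mulr_ge0 // sqr_ge0.
  exists i; first by rewrite inE.
  by rewrite inE M'jj negbK /c expr2 mulKf ?subrr.
have -> : M0 = M' + c *: (w *m w^T) by rewrite /M' subrK.
rewrite mulmxDr mxtraceD -scalemxAr mxtraceZ tr_rank1'.
by apply: addr_ge0; [apply: IH | apply: mulr_ge0].
Qed.

Lemma bfgs_u0 (R : rcfType) n (A G : 'M[R]_n) : BFGS A G 0 = G.
Proof. by rewrite /BFGS !mulmx0 !mul0mx !scaler0 subr0 addr0. Qed.

Lemma symmxB (R : rcfType) n (A G : 'M[R]_n) : symmx A -> symmx G -> symmx (G - A).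
Proof. by move=> sA sG; rewrite /symmx linearB /= sA sG. Qed.

Lemma bfgs_sym (R : rcfType) n (A G : 'M[R]_n) u :
  symmx A -> symmx G -> symmx (BFGS A G u).
Proof.
move=> sA sG; rewrite /symmx /BFGS linearD linearB !linearZ /= !trmx_mul !trmxK sA sG.
by rewrite !mulmxA.
Qed.

Lemma qfB (R : rcfType) n (M N : 'M[R]_n) u : qf (M - N) u = qf M u - qf N u.
Proof. by rewrite !qfE bilMB. Qed.

Lemma bfgs_psd (R : rcfType) n (A G : 'M[R]_n) (mu : R) u :
  0 < mu -> symmx A -> psdmx (A - mu%:M) -> symmx G -> psdmx (G - A) ->
  psdmx (BFGS A G u - A).
Proof.
move=> mu0 sA pA sG pGA v.
case: (eqVneq u 0) => [->|nz]; first by rewrite bfgs_u0; exact: pGA.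
have cpos : 0 < qf A u := pd_gt0 mu0 pA nz.
have gpos : 0 < qf G u by have := pGA u; rewrite qfB subr_ge0; apply: lt_le_trans.
rewrite /BFGS qfE !(bilMD, bilMN, bilMZ) -!qfE !qf_rank1.
rewrite (@bil_sym _ _ G u v sG) (@bil_sym _ _ A u v sA).
set g := qf G u; set c := qf A u; set pg := bil G v u; set pa := bil A v u.
set X := qf G v; set Y := qf A v.
set beta := pg / g.
have H := pGA (v + (- beta) *: u).
rewrite (qf_add_scale _ _ _ (symmxB sA sG)) !qfB qfE bilMB -/pg -/pa -/X -/Y -/g -/c in H.
have -> : X - g^-1 * (pg * pg) + c^-1 * (pa * pa) - Y =
   (X - Y + (pg - pa) * - beta * 2 + (g - c) * (- beta) ^+ 2) + c^-1 * (pa - beta * c) ^+ 2.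
  by rewrite /beta; field; rewrite !gt_eqF.
by apply: addr_ge0 => //; apply: mulr_ge0; [rewrite invr_ge0 ltW | apply: sqr_ge0].
Qed.

Lemma psd_of_pd (R : rcfType) n (A : 'M[R]_n) (mu : R) :
  0 < mu -> psdmx (A - mu%:M) -> psdmx A.
Proof.
move=> mu0 pA v; case: (eqVneq v 0) => [->|nz]; last exact/ltW/(pd_gt0 mu0 pA nz).
by rewrite /qf mulmx0 mxE.
Qed.

Lemma unit_of_pd (R : rcfType) n (A : 'M[R]_n) (mu : R) :
  0 < mu -> psdmx (A - mu%:M) -> A \in unitmx.
Proof. by move=> mu0 pA; apply: pd_unit => u; apply: pd_gt0 mu0 pA. Qed.

Lemma inv_sym (R : rcfType) n (A : 'M[R]_n) : symmx A -> symmx (invmx A).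
Proof. by move=> sA; rewrite /symmx trmx_inv sA. Qed.

Lemma inv_psd (R : rcfType) n (A : 'M[R]_n) (mu : R) :
  0 < mu -> symmx A -> psdmx (A - mu%:M) -> psdmx (invmx A).
Proof.
move=> mu0 sA pA w; have uA := unit_of_pd mu0 pA.
have := psd_of_pd mu0 pA (invmx A *m w).
rewrite qfE bil_mul inv_sym // mulVmx // mul1mx.
by [].
Qed.

Lemma qf_inv_mul (R : rcfType) n (A X Y : 'M[R]_n) u v :
  bil (invmx A) (X *m u) (Y *m v) = bil (X^T *m invmx A *m Y) u v.
Proof. by rewrite bil_mul. Qed.

Lemma sigma_bfgs (R : rcfType) n (A G : 'M[R]_n) (mu : R) u :
  0 < mu -> psdmx (A - mu%:M) -> u != 0 ->
  sigma A (BFGS A G u) = sigma A G - qf (G *m invmx A *m G) u / qf G u + 1.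
Proof.
move=> mu0 pA nz; have uA := unit_of_pd mu0 pA.
have cpos : 0 < qf A u := pd_gt0 mu0 pA nz.
rewrite /sigma /BFGS mulmxDr mulmxBr mxtraceD raddfB /= -!scalemxAr !mxtraceZ !tr_rank1.
rewrite mulmxV // mul1mx mulVf ?gt_eqF //.
by rewrite mulrC; ring.
Qed.

Lemma theta_sq (R : rcfType) n (A G : 'M[R]_n) (mu : R) u :
  0 < mu -> symmx A -> psdmx (A - mu%:M) -> symmx G ->
  theta A G u ^+ 2 =
    (qf (G *m invmx A *m G) u - 2 * qf G u + qf A u) / qf (G *m invmx A *m G) u.
Proof.
move=> mu0 sA pA sG; have uA := unit_of_pd mu0 pA.
have pAi := inv_psd mu0 sA pA.
have E : (G - A) *m invmx A *m (G - A) = G *m invmx A *m G - G - G + A.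
  rewrite mulmxBr !mulmxBl mulmxV // !mul1mx -[G *m invmx A *m A]mulmxA mulVmx // mulmx1.
  by rewrite opprB addrA addrAC.
rewrite /theta sqr_sqrtr.
  by rewrite E !qfE !(bilMD, bilMN) mulr2n; congr (_ / _); ring.
apply: divr_ge0.
  have -> : (G - A) *m invmx A *m (G - A) = (G - A)^T *m invmx A *m (G - A)
    by rewrite symmxB.
  by rewrite qfE -bil_mul -qfE.
have -> : G *m invmx A *m G = G^T *m invmx A *m G by rewrite sG.
by rewrite qfE -bil_mul -qfE.
Qed.

Lemma sym1 (R : rcfType) n : symmx (1%:M : 'M[R]_n).
Proof. by rewrite /symmx trmx1. Qed.

Lemma psd1 (R : rcfType) n : psdmx (1%:M : 'M[R]_n).
Proof. by move=> v; apply: qf1_ge0. Qed.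

Lemma cs_agc (R : rcfType) n (A G : 'M[R]_n) (mu : R) u :
  0 < mu -> symmx A -> psdmx (A - mu%:M) -> symmx G ->
  qf G u ^+ 2 <= qf (G *m invmx A *m G) u * qf A u.
Proof.
move=> mu0 sA pA sG; have uA := unit_of_pd mu0 pA.
have := cauchy_schwarz (G *m u) (A *m u) (inv_sym sA) (inv_psd mu0 sA pA).
rewrite bil_mul !qfE !bil_mul -!qfE sG sA -(mulmxA G) mulVmx // mulmx1.
by rewrite mulmxV // mul1mx.
Qed.

Lemma sigma_theta (R : rcfType) n (A G : 'M[R]_n) (mu : R) u :
  0 < mu -> symmx A -> psdmx (A - mu%:M) -> symmx G -> psdmx (G - A) ->
  sigma A (BFGS A G u) <= sigma A G - theta A G u ^+ 2.
Proof.
move=> mu0 sA pA sG pGA.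
case: (eqVneq u 0) => [->|nz].
  rewrite bfgs_u0 /theta /qf !mulmx0 !mxE mul0r sqrtr0 expr2 mul0r subr0.
  by [].
rewrite (sigma_bfgs G mu0 pA nz) (theta_sq u mu0 sA pA sG).
have cpos : 0 < qf A u := pd_gt0 mu0 pA nz.
have gc : qf A u <= qf G u by have := pGA u; rewrite qfB subr_ge0.
have gpos : 0 < qf G u := lt_le_trans cpos gc.
have CS := cs_agc u mu0 sA pA sG.
set a := qf (G *m invmx A *m G) u in CS *; set g := qf G u in gc gpos CS *.
set c := qf A u in cpos gc CS *.
have apos : 0 < a.
  have : 0 < a * c by apply: lt_le_trans CS; rewrite exprn_gt0.
  by rewrite pmulr_lgt0.
rewrite -addrA lerD2l -[- (a / g) + 1]opprK opprD opprK lerN2.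
have -> : a / g - 1 = (a - 2 * g + c) / a + ((a - g) ^+ 2 + g * (g - c)) / (g * a).
  by field; rewrite !gt_eqF.
rewrite lerDl; apply: divr_ge0; last by rewrite mulr_ge0 // ltW.
by rewrite addr_ge0 ?sqr_ge0 // mulr_ge0 ?subr_ge0 // ltW.
Qed.

Lemma evec_neq0 (R : rcfType) n (k : 'I_n) : evec R k != 0.
Proof.
apply/eqP => h; have := qf_evec (1%:M : 'M[R]_n) k.
by rewrite h /qf mulmx0 !mxE eqxx /= => /eqP; rewrite eq_sym oner_eq0.
Qed.

Lemma psd_B (R : rcfType) n (A : 'M[R]_n) (mu : R) :
  0 < mu -> symmx A -> psdmx (A - mu%:M) -> psdmx (1%:M - mu *: invmx A).
Proof.
move=> mu0 sA pA v; have uA := unit_of_pd mu0 pA.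
rewrite qfB [qf (_ *: _) _]qfE bilMZ -qfE subr_ge0.
set s := qf (invmx A) v.
set y := invmx A *m v.
have s1 : s = bil 1%:M v y by rewrite /s /y /bil mulmx1 mulmxA.
have s2 : qf A y = s.
  by rewrite /y qfE bil_mul (inv_sym sA) mulVmx // mul1mx.
have h1 : mu * qf 1%:M y <= s by rewrite -s2; apply: pd_of.
have CS := cauchy_schwarz v y (@sym1 R n) (@psd1 R n).
rewrite -s1 in CS.
have s0 : 0 <= s by apply: (inv_psd mu0 sA pA).
have q0 := qf1_ge0 v.
case: (eqVneq s 0) => [->|snz]; first by rewrite mulr0.
have spos : 0 < s by rewrite lt_def snz s0.
have : mu * s ^+ 2 <= qf 1%:M v * s.
  apply: le_trans (ler_wpM2l (ltW mu0) CS) _.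
  rewrite mulrCA ler_wpM2l //.
rewrite expr2 mulrA ler_pM2r //.
Qed.

Lemma sigma_tr (R : rcfType) n (A G : 'M[R]_n) (mu : R) :
  0 < mu -> psdmx (A - mu%:M) -> sigma A G = \tr (invmx A *m (G - A)).
Proof.
move=> mu0 pA; have uA := unit_of_pd mu0 pA.
rewrite /sigma mulmxBr raddfB /= mulVmx // mxtrace1; reflexivity.
Qed.

Lemma sigma_ge0 (R : rcfType) n (A G : 'M[R]_n) (mu : R) :
  0 < mu -> symmx A -> psdmx (A - mu%:M) -> symmx G -> psdmx (G - A) ->
  0 <= sigma A G.
Proof.
move=> mu0 sA pA sG pGA; rewrite (sigma_tr G mu0 pA).
by apply: tr_psd_ge0 => //; [apply: (inv_psd mu0 sA pA) | apply: symmxB].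
Qed.

Lemma mu_sigma_tr (R : rcfType) n (A G : 'M[R]_n) (mu : R) :
  0 < mu -> symmx A -> psdmx (A - mu%:M) -> symmx G -> psdmx (G - A) ->
  mu * sigma A G <= \tr (G - A).
Proof.
move=> mu0 sA pA sG pGA; rewrite (sigma_tr G mu0 pA) -subr_ge0.
have := tr_psd_ge0 (psd_B mu0 sA pA) (symmxB sA sG) pGA.
rewrite mulmxBl mul1mx -scalemxAl raddfB /= mxtraceZ; exact.
Qed.

Lemma greedy (R : rcfType) n (A G : 'M[R]_n) (mu L : R) (k : 'I_n) :
  0 < mu -> mu <= L -> symmx A -> psdmx (A - mu%:M) -> psdmx (L%:M - A) ->
  symmx G -> psdmx (G - A) ->
  (forall j, gratio A G (evec R j) <= gratio A G (evec R k)) ->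
  sigma A (BFGS A G (evec R k)) <= (1 - mu / (n%:R * L)) * sigma A G.
Proof.
move=> mu0 muL sA pA pLA sG pGA Hmax.
have Lpos : 0 < L := lt_le_trans mu0 muL.
have n0 : (0 < n)%N := leq_ltn_trans (leq0n k) (ltn_ord k).
have npos : 0 < n%:R :> R by rewrite ltr0n.
have nz := evec_neq0 R k.
have hmu := mu_sigma_tr mu0 sA pA sG pGA.
rewrite (sigma_bfgs G mu0 pA nz).
have cpos : 0 < qf A (evec R k) := pd_gt0 mu0 pA nz.
have gc : qf A (evec R k) <= qf G (evec R k) by have := pGA (evec R k); rewrite qfB subr_ge0.
have gpos : 0 < qf G (evec R k) := lt_le_trans cpos gc.
have CS := cs_agc (evec R k) mu0 sA pA sG.
have hj : forall j, (G - A) j j <= L * (gratio A G (evec R k) - 1).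
  move=> j; have := Hmax j; rewrite /gratio (qf_evec G j) (qf_evec A j).
  set r := qf G (evec R k) / qf A (evec R k) => Hj.
  have cjmu : mu <= A j j.
    by have := pd_of (evec R j) mu0 pA; rewrite qf_evec qf_evec mxE eqxx mulr1.
  have cjL : A j j <= L.
    by have := pLA (evec R j); rewrite qf_evec !mxE eqxx mulr1n subr_ge0.
  have gjcj : A j j <= G j j.
    by have := pGA (evec R j); rewrite qf_evec !mxE subr_ge0.
  have cjpos : 0 < A j j := lt_le_trans mu0 cjmu.
  have r1 : 1 <= r by rewrite /r ler_pdivlMr // mul1r.
  rewrite ler_pdivrMr // in Hj.
  rewrite !mxE; nra.
have htr : \tr (G - A) <= n%:R * (L * (gratio A G (evec R k) - 1)).
  apply: le_trans (ler_sum _ (fun j _ => hj j)) _.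
  by rewrite sumr_const card_ord mulr_natl.
have hga : gratio A G (evec R k) <= qf (G *m invmx A *m G) (evec R k) / qf G (evec R k).
  by rewrite /gratio ler_pdivrMr // mulrAC ler_pdivlMr // -expr2.
set s := sigma A G in hmu *.
set a := qf (G *m invmx A *m G) (evec R k) in hga *.
set g := qf G (evec R k) in hga gpos *.
set r := gratio A G (evec R k) in htr hga.
have key : mu / (n%:R * L) * s <= a / g - 1.
  rewrite mulrAC ler_pdivrMr ?mulr_gt0 //.
  apply: le_trans hmu _; apply: le_trans htr _.
  rewrite mulrA [X in X <= _]mulrC; apply: ler_wpM2r.
    by rewrite mulr_ge0 ?ltW.
  by rewrite lerD2r.
set w := mu / (n%:R * L) * s in key.
rewrite mulrBl mul1r -/w.
set t := a / g in key *.
lra.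
Qed.

Theorem lemma4 (R : rcfType) (d : nat) (mu L : R) (A : 'M[R]_d) (b : 'cV[R]_d)
    (x : nat -> 'cV[R]_d) (G Gbar : nat -> 'M[R]_d) (idx : nat -> 'I_d) :
  (0 < d)%N -> 0 < mu -> mu <= L ->
  symmx A -> psdmx (A - mu%:M) -> psdmx (L%:M - A) ->
  G 0%N = L%:M ->
  (forall t, x t.+1 = x t - invmx (G t) *m gradq A b (x t)) ->
  (forall t, Gbar t = BFGS A (G t) (x t.+1 - x t)) ->
  (forall t (j : 'I_d), gratio A (Gbar t) (evec R j) <= gratio A (Gbar t) (evec R (idx t))) ->
  (forall t, G t.+1 = BFGS A (Gbar t) (evec R (idx t))) ->
  (forall t, (forall i, (i <= t)%N -> gradq A b (x i) != 0) ->
     sigma A (G t.+1) <=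
       (1 - mu / (d%:R * L)) * (sigma A (G t) - theta A (G t) (x t.+1 - x t) ^+ 2))
  /\
  (forall t, (1 <= t)%N -> (forall i, (i < t)%N -> gradq A b (x i) != 0) ->
     \sum_(i < t) theta A (G i) (x i.+1 - x i) ^+ 2 / (1 - mu / (d%:R * L)) ^+ i
       <= sigma A (G 0%N)).
Proof.
move=> d0 mu0 muL sA pA pLA G0 Hx HGb Hmax HG.
have Lpos : 0 < L := lt_le_trans mu0 muL.
have inv : forall t, symmx (G t) /\ psdmx (G t - A).
  elim=> [|t [sG pG]].
    by rewrite G0; split => //; rewrite /symmx tr_scalar_mx.
  have sGb : symmx (Gbar t) by rewrite HGb; apply: bfgs_sym.
  have pGb : psdmx (Gbar t - A) by rewrite HGb; apply: (bfgs_psd _ mu0 sA pA).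
  rewrite HG; split; [by apply: bfgs_sym | by apply: (bfgs_psd _ mu0 sA pA)].
have invb : forall t, symmx (Gbar t) /\ psdmx (Gbar t - A).
  move=> t; have [sG pG] := inv t.
  by rewrite HGb; split; [apply: bfgs_sym | apply: (bfgs_psd _ mu0 sA pA)].
set q := 1 - mu / (d%:R * L).
have dpos : 0 < d%:R :> R by rewrite ltr0n.
have q0 : 0 <= q.
  rewrite /q subr_ge0 ler_pdivrMr ?mulr_gt0 // mul1r.
  have d1 : 1 <= d%:R :> R by rewrite ler1n.
  nra.
have step : forall t, sigma A (G t.+1) <=
    q * (sigma A (G t) - theta A (G t) (x t.+1 - x t) ^+ 2).
  move=> t; have [sG pG] := inv t; have [sGb pGb] := invb t.
  rewrite HG; apply: le_trans (greedy mu0 muL sA pA pLA sGb pGb (Hmax t)) _.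
  rewrite -/q; apply: ler_wpM2l => //.
  by rewrite HGb; exact: (sigma_theta _ mu0 sA pA sG pG).
split; first by move=> t _; apply: step.
move=> t t1 _.
have sig0 : forall t, 0 <= sigma A (G t).
  by move=> i; have [sG pG] := inv i; apply: (sigma_ge0 mu0 sA pA).
case: (eqVneq q 0) => [qz|qnz].
  case: t t1 => // t _.
  rewrite big_ord_recl /= big1 ?addr0; last first.
    by move=> i _; rewrite qz expr0n /= invr0 mulr0.
  rewrite expr0 invr1 mulr1.
  have [sG pG] := inv 0%N.
  have := sigma_theta (x 1%N - x 0%N) mu0 sA pA sG pG.
  rewrite -HGb => h; have [sGb pGb] := invb 0%N.
  have := sigma_ge0 mu0 sA pA sGb pGb; lra.
have qpos : 0 < q by rewrite lt_def qnz q0.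
suff H : forall t, \sum_(i < t) theta A (G i) (x i.+1 - x i) ^+ 2 / q ^+ i
    + sigma A (G t) / q ^+ t <= sigma A (G 0%N).
  apply: le_trans (H t); rewrite lerDl divr_ge0 ?exprn_ge0 //.
clear t t1; elim=> [|t IH]; first by rewrite big_ord0 add0r expr0 divr1.
apply: le_trans IH; rewrite big_ord_recr /= -addrA lerD2l.
have qt : 0 < q ^+ t by rewrite exprn_gt0.
have h1 : sigma A (G t.+1) / q ^+ t.+1 <=
    (sigma A (G t) - theta A (G t) (x t.+1 - x t) ^+ 2) / q ^+ t.
  rewrite exprSr invfM mulrA ler_pdivrMr // mulrAC ler_pM2r ?invr_gt0 //.
  by rewrite mulrC; apply: step.
apply: le_trans (_ : _ <= theta A (G t) (x t.+1 - x t) ^+ 2 / q ^+ t +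
   (sigma A (G t) - theta A (G t) (x t.+1 - x t) ^+ 2) / q ^+ t) _.
  by rewrite lerD2l.
by rewrite -mulrDl addrC subrK.
Qed.
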